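(* For all positive integers $n$ and $q$, let $Q := 2q+1$. Then $$f(n,q) \leq {}^{n-1}Q := Q^{Q^{\cdot^{\cdot^{\cdot^{Q}}}}},$$ where $Q$ occurs $n-1$ times in the exponential tower (with the convention that the tower of height $0$ equals $1$).
   Context: A $q$-ary word is a finite string of characters over an alphabet of $q$ letters; the empty word is $\varepsilon$ and words form a semigroup under concatenation. $V$ is a subword of $W$ if $W = UVU'$ for some (possibly empty) words $U,U'$. A word $W$ is an instance of a word $V = x_0x_1\cdots x_{m-1}$ (each $x_i$ a letter) if $W = A_0A_1\cdots A_{m-1}$ with each $A_i$ nonempty and $A_i = A_j$ whenever $x_i = x_j$ (equivalently, $W=\phi(V)$ for a semigroup homomorphism $\phi$ sending letters to nonempty words). A word $U$ encounters $V$ if some subword of $U$ is an instance of $V$; otherwise $U$ avoids $V$. The Zimin words are defined by $Z_0 := \varepsilon$ and $Z_{n+1} := Z_n x_n Z_n$ for distinct letters $x_0,x_1,\dots$ (so $Z_1 = a$, $Z_2 = aba$, $Z_3 = abacaba$, ...). For positive integers $n,q$, $f(n,q)$ denotes the smallest integer $M$ such that every $q$-ary word of length $M$ encounters $Z_n$. *)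

(* Defs.v *)
From mathcomp Require Import all_boot.
Set Implicit Arguments. Unset Strict Implicit. Unset Printing Implicit Defensive.

Fixpoint zimin (n : nat) : seq nat :=
  if n is k.+1 then zimin k ++ k :: zimin k else [::].

Definition instance_of (T : Type) (W : seq T) (V : seq nat) : Prop :=
  exists phi : nat -> seq T,
    (forall x, x \in V -> phi x <> [::]) /\ W = flatten (map phi V).

Definition encounters (T : Type) (U : seq T) (V : seq nat) : Prop :=
  exists A S B : seq T, U = A ++ S ++ B /\ instance_of S V.

Definition all_encounter (n q M : nat) : Prop :=
  forall w : seq 'I_q, size w = M -> encounters w (zimin n).

Definition is_f (n q M : nat) : Prop :=
  all_encounter n q M /\ (forall M', all_encounter n q M' -> M <= M').

Fixpoint tower (Q k : nat) : nat :=
  if k is j.+1 then Q ^ tower Q j else 1.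

(* Main.v *)
Require Import Defs.
From mathcomp Require Import all_boot.
From mathcomp Require Import zify.
From Stdlib Require Import Classical.

Set Implicit Arguments. Unset Strict Implicit. Unset Printing Implicit Defensive.

Lemma zimin_lt n x : x \in zimin n -> x < n.
Proof.
elim: n => [|n IH] //=.
rewrite mem_cat inE => /orP [/IH H| /orP [/eqP -> // | /IH H]]; lia.
Qed.

Lemma key (T : Type) n (W U : seq T) M p r :
  p + M < r -> r <= size W -> take M (drop p W) = U -> take M (drop r W) = U ->
  encounters U (zimin n) -> encounters W (zimin n.+1).
Proof.
move=> hpr hrW hp hr [A [S [B [hU [phi [hne hS]]]]]].
set d := r - (p + M).
set Mid := take d (drop (p + M) W).
have hW : W = take p W ++ U ++ Mid ++ U ++ drop (r + M) W.
  rewrite -{1}(cat_take_drop p W); congr (_ ++ _).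
  rewrite -{1}(cat_take_drop M (drop p W)) hp; congr (_ ++ _).
  rewrite drop_drop addnC -{1}(cat_take_drop d (drop (p + M) W)); congr (_ ++ _).
  rewrite drop_drop (_ : d + (p + M) = r); last by rewrite /d; lia.
  rewrite -{1}(cat_take_drop M (drop r W)) hr drop_drop addnC //.
have hMid : Mid <> [::].
  move=> h; have := congr1 size h; rewrite /Mid size_take size_drop /d /=; case: ltnP; lia.
exists (take p W ++ A), (S ++ (B ++ Mid ++ A) ++ S), (B ++ drop (r + M) W).
split.
  by rewrite {1}hW hU -!catA.
pose phi' := fun x => if x == n then B ++ Mid ++ A else phi x.
have hm : map phi' (zimin n) = map phi (zimin n).
  apply/eq_in_map => x /zimin_lt hx; rewrite /phi'.
  by have -> : (x == n) = false by apply/negbTE; rewrite neq_ltn hx.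
exists phi'; split.
  move=> x /=; rewrite mem_cat inE => /orP [hx | /orP [/eqP -> | hx]].
  - rewrite /phi'; have -> : (x == n) = false by apply/negbTE; rewrite neq_ltn (zimin_lt hx).
    exact: hne.
  - rewrite /phi' eqxx => /(congr1 size); rewrite !size_cat /= => h0; apply: hMid; apply: size0nil; lia.
  - rewrite /phi'; have -> : (x == n) = false by apply/negbTE; rewrite neq_ltn (zimin_lt hx).
    exact: hne.
rewrite /= map_cat /= hm flatten_cat /= -hS /phi' eqxx -catA //.
Qed.

Lemma step n q M : 0 < q ->
  (forall w : seq 'I_q, M <= size w -> encounters w (zimin n)) ->
  forall w : seq 'I_q, M.+1 * q ^ M + M <= size w -> encounters w (zimin n.+1).
Proof.
move=> hq IH w hw.
pose x0 : 'I_q := Ordinal hq.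
pose f := fun i : 'I_(q ^ M).+1 => [ffun k : 'I_M => nth x0 w (i * M.+1 + k)].
have hsz : forall i : 'I_(q ^ M).+1, size (take M (drop (i * M.+1) w)) = M.
  move=> i; rewrite size_take size_drop.
  have hi : M <= size w - i * M.+1 by have := ltn_ord i; nia.
  case: (ltnP M (size w - i * M.+1)) => h //; lia.
have hnth : forall (i : 'I_(q ^ M).+1) (k : 'I_M),
    nth x0 (take M (drop (i * M.+1) w)) k = f i k.
  by move=> i k; rewrite nth_take // nth_drop /f ffunE.
have gen : forall i j : 'I_(q ^ M).+1, i < j -> f i = f j -> encounters w (zimin n.+1).
  move=> i j hij hf.
  apply: (@key _ n w (take M (drop (i * M.+1) w)) M (i * M.+1) (j * M.+1)) => //.
  - nia.
  - have := ltn_ord j; nia.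
  - apply: (eq_from_nth (x0 := x0)); first by rewrite !hsz.
    move=> k; rewrite hsz => hk.
    have := hnth i (Ordinal hk); have := hnth j (Ordinal hk); rewrite /= hf => -> -> //.
  - by apply: IH; rewrite hsz.
have : ~~ injectiveb f.
  apply/negP => /injectiveP /leq_card.
  by rewrite card_ffun !card_ord ltnn.
case/injectivePn => i [j hneq hf].
move: hneq; rewrite neq_ltn => /orP [h | h].
- exact: gen hf.
- exact: gen (esym hf).
Qed.

Lemma arith q M : 0 < q -> M.+1 * q ^ M + M <= (2 * q + 1) ^ M.
Proof.
move=> hq; elim: M => [|M IH]; first by rewrite !expn0.
case: M IH => [|M] IH; first by rewrite !expn1; lia.
rewrite (expnS q) (expnS (2 * q + 1)).
move: IH; set a := q ^ M.+1; set b := (2 * q + 1) ^ M.+1 => IH.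
nia.
Qed.

Definition Penc q n L := forall w : seq 'I_q, L <= size w -> encounters w (zimin n).

Lemma P0 q : Penc q 0 0.
Proof.
move=> w _; exists [::], [::], w; split => //.
by exists (fun _ => [::]); split.
Qed.

Lemma Ptower q k : 0 < q -> Penc q k.+1 (tower (2 * q + 1) k).
Proof.
move=> hq; elim: k => [|k IH].
  move=> w hw; apply: (@step 0 q 0 hq (@P0 q)); rewrite /= in hw *; lia.
move=> w hw /=; apply: (@step k.+1 q _ hq IH).
apply: leq_trans hw; exact: arith.
Qed.

Lemma min_exists (P : nat -> Prop) T : P T ->
  exists M, P M /\ (forall M', P M' -> M <= M') /\ M <= T.
Proof.
elim: T {-2}T (leqnn T) => [|T IH] T' hT' hP.
  exists T'; split => //; split => [M' _|//]; lia.
case: (classic (exists M', P M' /\ M' < T')) => [[M' [hM' hlt]] | hno].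
  have [M [h1 [h2 h3]]] := IH M' ltac:(lia) hM'.
  exists M; split => //; split => //; lia.
exists T'; split => //; split => // M' hM'.
rewrite leqNgt; apply/negP => hlt; apply: hno; by exists M'.
Qed.

Theorem mainTheorem1 (n q : nat) (hn : 0 < n) (hq : 0 < q) :
  exists M : nat, is_f n q M /\ M <= tower (2 * q + 1) (n - 1).
Proof.
case: n hn => [//|k] _.
have hA : all_encounter k.+1 q (tower (2 * q + 1) k).
  move=> w hw; apply: (@Ptower q k hq); rewrite hw.
  done.
have [M [h1 [h2 h3]]] := min_exists hA.
exists M; split; first by split.
by rewrite subn1.
Qed.
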